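(* Let $E\in\mathbb C$ not be an eigenvalue of $h$, and let $g(E)=(h-EI_{nm})^{-1}$ with $m\times m$ blocks $g_{i,j}$, $i,j=1,\dots,n$. Then $$\begin{pmatrix}0 & -B_n^{-1}\\ g_{n,1} & g_{n,n}\end{pmatrix}=T(E)\begin{pmatrix} g_{1,1} & g_{1,n}\\ -C_1^{-1} & 0\end{pmatrix},$$ the block $g_{1,n}$ is invertible, and $$T(E)=\begin{pmatrix}-B_n^{-1}g_{1,n}^{-1} & -B_n^{-1}g_{1,n}^{-1}g_{1,1}C_1\\ g_{n,n}g_{1,n}^{-1} & g_{n,n}g_{1,n}^{-1}g_{1,1}C_1-g_{n,1}C_1\end{pmatrix}.$$
   Context: Fix integers $m\ge 1$, $n\ge 2$ and matrices $A_k,B_k,C_k\in\mathbb C^{m\times m}$, $k=1,\dots,n$, with all $B_k,C_k$ invertible. For $E\in\mathbb C$ the one-step transfer matrices are $t_k(E)=\begin{pmatrix} B_k^{-1}(E I_m-A_k) & -B_k^{-1}C_k\\ I_m & 0\end{pmatrix}\in\mathbb C^{2m\times 2m}$ and the transfer matrix is $T(E)=t_n(E)\cdots t_1(E)$. The open-chain matrix $h\in\mathbb C^{nm\times nm}$ is the block tridiagonal matrix with diagonal blocks $h_{kk}=A_k$, superdiagonal blocks $h_{k,k+1}=B_k$, subdiagonal blocks $h_{k+1,k}=C_{k+1}$ ($k=1,\dots,n-1$), and all other blocks zero. *)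

(* Defs.v *)
From HB Require Import structures.
From mathcomp Require Import all_boot all_order all_algebra.
Set Implicit Arguments. Unset Strict Implicit. Unset Printing Implicit Defensive.
Import Order.TTheory GRing.Theory Num.Theory.
Local Open Scope ring_scope.

(* Block sequences are indexed 1-based by nat: A k, B k, C k for k = 1..n
   (values at other indices are irrelevant). *)

Section Chain.
Variable F : fieldType.
Variables (m n : nat).
Variables (A B C : nat -> 'M[F]_m).

Definition tstep (k : nat) (E : F) : 'M[F]_(m + m) :=
  block_mx (invmx (B k) *m (E%:M - A k)) (- (invmx (B k) *m C k))
           (1%:M) 0.

Fixpoint Tupto (k : nat) (E : F) : 'M[F]_(m + m) :=
  match k with
  | 0 => 1%:M
  | k'.+1 => tstep k'.+1 E *m Tupto k' E
  end.

Definition transfer (E : F) : 'M[F]_(m + m) := Tupto n E.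

(* open-chain block tridiagonal matrix h; global row index r lies in
   block r %/ m + 1 (1-based) at offset r %% m *)
Definition hchain : 'M[F]_(n * m) :=
  \matrix_(r < n * m, c < n * m)
    let i := ((r %/ m).+1)%N in let j := ((c %/ m).+1)%N in
    let a := (r %% m)%N in let b := (c %% m)%N in
    let get (M : 'M[F]_m) :=
      (match insub a, insub b with
       | Some a', Some b' => M a' b'
       | _, _ => 0 end) in
    if i == j then get (A i)
    else if j == i.+1 then get (B i)
    else if i == j.+1 then get (C i)
    else 0.
End Chain.

(* entry of an N x N matrix at nat indices (0 outside the range) *)
Definition natentry (F : fieldType) (N : nat) (M : 'M[F]_N) (r c : nat) : F :=
  match insub r, insub c with
  | Some r', Some c' => M r' c'
  | _, _ => 0
  end.

Definition mblock (F : fieldType) (n m : nat) (M : 'M[F]_(n * m)) (i j : nat)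
  : 'M[F]_m :=
  \matrix_(a < m, b < m) natentry M (i.-1 * m + a)%N (j.-1 * m + b)%N.

(* Main.v *)
Require Import Defs.
From HB Require Import structures.
From mathcomp Require Import all_boot all_order all_algebra zify.
Set Implicit Arguments. Unset Strict Implicit. Unset Printing Implicit Defensive.
Import GRing.Theory.
Local Open Scope ring_scope.

Lemma natentryE (F : fieldType) N (M : 'M[F]_N) (r c : 'I_N) : natentry M r c = M r c.
Proof. by rewrite /natentry !valK. Qed.

Lemma natentryB (F : fieldType) N (M M' : 'M[F]_N) r c :
  natentry (M - M') r c = natentry M r c - natentry M' r c.
Proof. by rewrite /natentry; case: (insub r : option (ordinal N)) => [?|]; case: (insub c : option (ordinal N)) => [?|] //=; rewrite ?mxE ?subr0. Qed.

Lemma mblockB (F : fieldType) n m (M M' : 'M[F]_(n * m)) i j :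
  mblock (M - M') i j = mblock M i j - mblock M' i j.
Proof. by apply/matrixP => a b; rewrite !mxE natentryB. Qed.



Lemma sum_split m (V : nmodType) n (f : nat -> V) :
  \sum_(c < n * m) f c = \sum_(l < n) \sum_(d < m) f (l * m + d)%N.
Proof.
elim: n => [|n IH]; first by rewrite mul0n !big_ord0.
rewrite big_ord_recr /= -IH mulSnr -!(big_mkord xpredT) /=.
rewrite (big_cat_nat _ (n := (n * m)%N)) ?leq_addr //=.
congr (_ + _); rewrite -{1}(add0n (n * m)%N) big_addn addKn big_mkord; by apply: eq_bigr => i _; rewrite addnC.
Qed.

Lemma natentry_ord (F : fieldType) N (M : 'M[F]_N) r c (hr : (r < N)%N) (hc : (c < N)%N) :
  natentry M r c = M (Ordinal hr) (Ordinal hc).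
Proof. by rewrite -natentryE. Qed.

Lemma idx_lt n m k (a : 'I_m) : (1 <= k <= n)%N -> (k.-1 * m + a < n * m)%N.
Proof. move=> /andP[k1 kn]; have := ltn_ord a; nia. Qed.

Lemma blk_div m k (a : 'I_m) : ((k.-1 * m + a) %/ m = k.-1)%N.
Proof. have m0 : (0 < m)%N by case: a; case: m. by rewrite divnMDl // divn_small ?addn0. Qed.

Lemma blk_mod m k (a : 'I_m) : ((k.-1 * m + a) %% m = a)%N.
Proof. by rewrite modnMDl modn_small. Qed.

Lemma mblock_mul (F : fieldType) n m (X Y : 'M[F]_(n * m)) i j :
  (1 <= i <= n)%N -> (1 <= j <= n)%N ->
  mblock (X *m Y) i j = \sum_(l < n) mblock X i l.+1 *m mblock Y l.+1 j.
Proof.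
move=> hi hj; apply/matrixP => a b.
have hr := @idx_lt n m i a hi; have hs := @idx_lt n m j b hj.
rewrite summxE !mxE (natentry_ord _ hr hs) mxE.
rewrite (eq_bigr (fun c : 'I_(n * m) => natentry X (i.-1 * m + a) c * natentry Y c (j.-1 * m + b))); last first.
  move=> c _; rewrite (natentry_ord _ hr (ltn_ord c)) (natentry_ord _ (ltn_ord c) hs).
  by have -> : Ordinal (ltn_ord c) = c by apply: val_inj.
rewrite (sum_split m n (fun c => natentry X (i.-1 * m + a) c * natentry Y c (j.-1 * m + b))).
by apply: eq_bigr => l _; rewrite mxE; apply: eq_bigr => d _; rewrite !mxE.
Qed.

Lemma mblock_hchain (F : fieldType) n m (A B C : nat -> 'M[F]_m) k l :
  (1 <= k <= n)%N -> (1 <= l <= n)%N ->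
  mblock (hchain n A B C) k l =
  if k == l then A k else if l == k.+1 then B k else if k == l.+1 then C k else 0.
Proof.
move=> hk hl; apply/matrixP => a b.
have hr := @idx_lt n m k a hk; have hs := @idx_lt n m l b hl.
rewrite mxE (natentry_ord _ hr hs) mxE /= !blk_div !blk_mod !valK.
have k1 : k.-1.+1 = k by move: hk; clear; case/andP; case: k.
have l1 : l.-1.+1 = l by move: hl; clear; case/andP; case: l.
rewrite k1 l1.
by case: ifP => _; [|case: ifP => _; [|case: ifP => _]]; rewrite ?mxE.
Qed.

Lemma mblock_scalar (F : fieldType) n m (x : F) k l :
  (1 <= k <= n)%N -> (1 <= l <= n)%N ->
  mblock (x%:M : 'M[F]_(n * m)) k l = if k == l then x%:M else 0.
Proof.
move=> hk hl; apply/matrixP => a b.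
have hr := @idx_lt n m k a hk; have hs := @idx_lt n m l b hl.
rewrite mxE (natentry_ord _ hr hs) !mxE /=.
have -> : (Ordinal hr == Ordinal hs) = (k.-1 * m + a == l.-1 * m + b)%N by [].
case: (k =P l) => [kl|kl]; first by rewrite kl mxE eqn_add2l.
rewrite mxE; case: eqP => // /(congr1 (fun r => r %/ m)%N).
rewrite !blk_div => e; case: kl.
by move: hk hl e; clear; case: k => // k _; case: l => // l _ /= ->.
Qed.

Lemma term_eq (F : fieldType) n m (A B C : nat -> 'M[F]_m) (E : F) (G : nat -> 'M[F]_m) k l :
  (1 <= k <= n)%N -> (l < n)%N ->
  mblock (hchain n A B C - E%:M) k l.+1 *m G l.+1 =
  (if l == k.-1 then (A k - E%:M) *m G k else 0) +
  (if l == k then B k *m G k.+1 else 0) +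
  (if l == k.-2 then (if (1 < k)%N then C k *m G k.-1 else 0) else 0).
Proof.
move=> hk hl; have hl1 : (1 <= l.+1 <= n)%N by [].
rewrite mblockB mblock_hchain // mblock_scalar //.
have [e|ne] := eqVneq k l.+1.
  rewrite e !eqxx /= (_ : (l == l.+1) = false); last by apply/eqP; lia.
  case: (l =P l.-1) => [e2|_]; last by rewrite !addr0.
  by rewrite (_ : (1 < l.+1)%N = false) ?addr0 //; lia.
rewrite (_ : (l == k.-1) = false); last by apply/eqP; lia.
rewrite subr0 add0r eqSS.
have [e|ne2] := eqVneq l k.
  rewrite e (_ : (k == k.-2) = false) ?addr0 //; apply/eqP; lia.
have [e|ne3] := eqVneq k l.+2.
  rewrite e /= eqxx add0r /=; congr (_ *m G _).
rewrite mul0mx add0r; case: (l =P k.-2) => // e; case: ifP => // h; lia.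
Qed.

Lemma sum_if (F : fieldType) m n p (X : 'M[F]_m) :
  \sum_(l < n) (if (l : nat) == p then X else 0) = if (p < n)%N then X else 0.
Proof.
case: ltnP => hp.
  rewrite (bigD1 (Ordinal hp)) //= eqxx big1 ?addr0 // => i ne.
  rewrite ifF //; apply: contraNF ne => /eqP e; apply/eqP/val_inj => /=; exact: e.
by apply: big1 => i _; rewrite ifF //; apply/eqP => e; have := ltn_ord i; lia.
Qed.

Lemma row_eq (F : fieldType) n m (A B C : nat -> 'M[F]_m) (E : F) (g : 'M[F]_(n * m))
  (hg : (hchain n A B C - E%:M) *m g = 1%:M) k j :
  (1 <= k <= n)%N -> (1 <= j <= n)%N ->
  (A k - E%:M) *m mblock g k j + (if (k < n)%N then B k *m mblock g k.+1 j else 0)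
  + (if (1 < k)%N then C k *m mblock g k.-1 j else 0) = if k == j then 1%:M else 0.
Proof.
move=> hk hj; have := congr1 (fun M => mblock M k j) hg.
rewrite /= mblock_mul // mblock_scalar // => <-.
rewrite (eq_bigr _ (fun l _ => term_eq A B C E (fun i => mblock g i j) hk (ltn_ord l))).
rewrite !big_split /= !sum_if.
have -> : (k.-1 < n)%N by lia.
by have -> : (k.-2 < n)%N by lia.
Qed.


Lemma step_lemma (F : fieldType) m (A B C X Y Z R : 'M[F]_m) (E : F) :
  B \in unitmx -> (A - E%:M) *m X + B *m Z + C *m Y = R ->
  invmx B *m ((E%:M - A) *m X - C *m Y) = Z - invmx B *m R.
Proof.
move=> uB <-.
rewrite -[E%:M - A]opprB mulNmx !mulmxDr !mulmxN mulKmx //.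
set P := invmx B *m _; set Q := invmx B *m _.
by rewrite !opprD [- P - Z]addrC !addrA subrr add0r.
Qed.

Lemma tstep_col (F : fieldType) m (A B C : nat -> 'M[F]_m) k (E : F) (X Y : 'M[F]_m) :
  tstep A B C k E *m col_mx X Y = col_mx (invmx (B k) *m ((E%:M - A k) *m X - C k *m Y)) X.
Proof.
rewrite /tstep mul_block_col mul1mx mul0mx addr0 mulNmx -!mulmxA -mulmxBr.
by [].
Qed.

Lemma TuptoS (F : fieldType) m (A B C : nat -> 'M[F]_m) k (E : F) :
  Tupto A B C k.+1 E = tstep A B C k.+1 E *m Tupto A B C k E.
Proof. by []. Qed.

Lemma final_col (F : fieldType) n m (A B C : nat -> 'M[F]_m) (E : F) (g : 'M[F]_(n * m))
  (hg : (hchain n A B C - E%:M) *m g = 1%:M) (hn : (2 <= n)%N)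
  (hB : forall k, (1 <= k <= n)%N -> B k \in unitmx) j (hj : (1 <= j <= n)%N)
  (hjmid : forall k, (1 < k < n)%N -> k != j) (Y0 : 'M[F]_m)
  (hY0 : (if 1%N == j then 1%:M else 0) + C 1%N *m Y0 = 0) :
  Tupto A B C n E *m col_mx (mblock g 1 j) Y0 =
  col_mx (- (invmx (B n) *m (if n == j then 1%:M else 0))) (mblock g n j).
Proof.
have claim : forall k, (1 <= k < n)%N ->
    Tupto A B C k E *m col_mx (mblock g 1 j) Y0 = col_mx (mblock g k.+1 j) (mblock g k j).
  elim=> [//|k IH] hk.
  case: k IH hk => [_ _|k IH hk].
    rewrite /= mulmx1 tstep_col; congr col_mx.
    have r1 := row_eq hg (k:=1) (j:=j) (ltac:(lia)) hj.
    rewrite (_ : (1 < n)%N) // /= addr0 in r1.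
    have := step_lemma (A := A 1%N) (C := C 1%N) (X := mblock g 1 j) (Z := mblock g 2 j) (Y := Y0) (E := E) (hB 1%N (ltac:(lia))) (erefl _).
    by rewrite r1 hY0 mulmx0 subr0; apply.
  rewrite TuptoS -mulmxA IH; last by lia.
  rewrite tstep_col; congr col_mx.
  have r1 := row_eq hg (k:=k.+2) (j:=j) (ltac:(lia)) hj.
  have hk2 : (k.+2 < n)%N by case/andP: hk.
  rewrite hk2 in r1.
  rewrite (_ : (k.+2 == j) = false) in r1; last by apply/negbTE/hjmid; lia.
  have := step_lemma (Y := mblock g k.+1 j) (E := E) (hB k.+2 (ltac:(lia))) r1.
  by rewrite mulmx0 subr0.
have -> : Tupto A B C n E = tstep A B C n E *m Tupto A B C n.-1 E.
  by case: (n) hn => // n' _; rewrite TuptoS.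
rewrite -mulmxA claim; last by lia.
rewrite tstep_col; congr col_mx.
have r1 := row_eq hg (k:=n) (j:=j) (ltac:(lia)) hj.
rewrite ltnn (_ : (1 < n)%N) // addr0 in r1.
have := step_lemma (A := A n) (C := C n) (X := mblock g n j) (Z := 0) (Y := mblock g n.-1 j) (E := E) (hB n (ltac:(lia))).
rewrite mulmx0 addr0 prednK; last by lia.
by move=> /(_ _ r1) ->; rewrite sub0r.
Qed.

Theorem proposition5 (F : fieldType) (m n : nat)
  (A B C : nat -> 'M[F]_m)
  (hm : (1 <= m)%N) (hn : (2 <= n)%N)
  (hB : forall k, (1 <= k <= n)%N -> B k \in unitmx)
  (hC : forall k, (1 <= k <= n)%N -> C k \in unitmx)
  (E : F)
  (hE : ~~ eigenvalue (hchain n A B C) E) :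
  let g := invmx (hchain n A B C - E%:M) in
  let gb := mblock g in
  let T := transfer n A B C E in
  [/\ block_mx 0 (- invmx (B n)) (gb n 1%N) (gb n n)
        = T *m block_mx (gb 1%N 1%N) (gb 1%N n) (- invmx (C 1%N)) 0,
      gb 1%N n \in unitmx
    & T = block_mx (- (invmx (B n) *m invmx (gb 1%N n)))
                   (- (invmx (B n) *m invmx (gb 1%N n) *m gb 1%N 1%N *m C 1%N))
                   (gb n n *m invmx (gb 1%N n))
                   (gb n n *m invmx (gb 1%N n) *m gb 1%N 1%N *m C 1%N
                      - gb n 1%N *m C 1%N)].
Proof.
move=> g gb T.
have hH : hchain n A B C - E%:M \in unitmx.
  by rewrite -row_free_unit -kermx_eq0; apply: negbNE.
have hg : (hchain n A B C - E%:M) *m g = 1%:M by rewrite mulmxV.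
have hn1 : (1 <= 1 <= n)%N by lia.
have hnn : (1 <= n <= n)%N by lia.
have hmid1 : forall k, (1 < k < n)%N -> k != 1%N by move=> k hk; apply/eqP; lia.
have hY01 : (if 1%N == 1%N then 1%:M else 0) + C 1%N *m (- invmx (C 1%N)) = 0.
  by rewrite eqxx mulmxN mulmxV ?hC // subrr.
have col1 := final_col hg hn hB hn1 hmid1 hY01.
rewrite (_ : (n == 1%N) = false) ?mulmx0 ?oppr0 in col1; last by apply/eqP; lia.
have hmidn : forall k, (1 < k < n)%N -> k != n by move=> k hk; apply/eqP; lia.
have hY0n : (if 1%N == n then 1%:M else 0) + C 1%N *m 0 = 0.
  by rewrite mulmx0 addr0 (_ : (1%N == n) = false) //; apply/eqP; lia.
have coln := final_col hg hn hB hnn hmidn hY0n.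
rewrite eqxx mulmx1 in coln.
have P1 : block_mx 0 (- invmx (B n)) (gb n 1%N) (gb n n)
        = T *m block_mx (gb 1%N 1%N) (gb 1%N n) (- invmx (C 1%N)) 0.
  by rewrite !block_mxEh mul_mx_row /T /transfer col1 coln.
have P2 : gb 1%N n \in unitmx.
  have := congr1 usubmx coln.
  rewrite -[Tupto A B C n E]submxK mul_block_col col_mxKu mulmx0 addr0 => e.
  have e2 : (- B n *m ulsubmx (Tupto A B C n E)) *m gb 1%N n = 1%:M.
    by rewrite -mulmxA /gb e col_mxKu mulmxN mulNmx opprK mulmxV ?hB.
  by case: (mulmx1_unit e2).
split=> //.
set M := block_mx (gb 1%N 1%N) (gb 1%N n) (- invmx (C 1%N)) 0.
set Mi := block_mx 0 (- C 1%N) (invmx (gb 1%N n)) (invmx (gb 1%N n) *m gb 1%N 1%N *m C 1%N).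
have MMi : M *m Mi = 1%:M.
  rewrite /M /Mi mulmx_block !mulmx0 !mul0mx ?addr0 ?add0r.
  rewrite mulmxV // !mulmxN mulNmx opprK mulVmx ?hC // !mulmxA mulmxV // mul1mx addNr.
  by rewrite [RHS]scalar_mx_block.
have -> : T = T *m (M *m Mi) by rewrite MMi mulmx1.
rewrite mulmxA -P1 /Mi mulmx_block !mulmx0 !mul0mx ?add0r ?addr0.
by rewrite !mulNmx !mulmxN !mulmxA addrC.
Qed.
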